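(* For $k=3$ and $d\in[6.74,7.5]$, the equation $\Psi_d(x)=x$ has a unique solution in $[\frac38,\frac12]$.
   Context: For $k=3$: $\hat\Psi(x)=\frac{1-2x^{2}}{1-x^{2}}$, $\dot\Psi(v)=\frac{1-v^{d-1}}{2-v^{d-1}}$, $\Psi_d=\dot\Psi\circ\hat\Psi$ ($d$ real). *)

(* Defs.v *)
From Stdlib Require Import Reals.
Open Scope R_scope.

(* k = 3 specialisation of the maps in the paper. *)
Definition Psi_hat (x : R) : R := (1 - 2 * x ^ 2) / (1 - x ^ 2).
Definition Psi_dot (d v : R) : R := (1 - Rpower v (d - 1)) / (2 - Rpower v (d - 1)).
Definition Psi (d x : R) : R := Psi_dot d (Psi_hat x).

(* Main.v *)
Require Import Defs.
From Stdlib Require Import Reals Lra Psatz Ranalysis5.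
From Coquelicot Require Import Coquelicot.
Open Scope R_scope.

Lemma exp_le' x y : x <= y -> exp x <= exp y.
Proof. intros [H|H]; [left; apply exp_increasing; auto| subst; lra]. Qed.

Lemma ln_le' x y : 0 < x -> x <= y -> ln x <= ln y.
Proof. intros Hx [H|H]; [left; apply ln_increasing; auto| subst; lra]. Qed.

Lemma ln_le_sub1 z : 0 < z -> ln z <= z - 1.
Proof. intros Hz. pose proof (exp_ineq1_le (ln z)). rewrite exp_ln in H; lra. Qed.

Lemma ph_eq x : 1 - x^2 <> 0 -> Psi_hat x = 2 - / (1 - x^2).
Proof. intros H. unfold Psi_hat. field. auto. Qed.

Lemma ph_anti x y : 0 <= x -> x <= y -> y <= 1/2 -> Psi_hat y <= Psi_hat x.
Proof.
  intros H0 H1 H2. rewrite !ph_eq by nra.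
  assert (/ (1 - x^2) <= / (1 - y^2)). { apply Rinv_le_contravar; nra. } lra.
Qed.

Lemma ph_range x : 3/8 <= x <= 1/2 -> 2/3 <= Psi_hat x <= 46/55.
Proof.
  intros [H1 H2]. split.
  - replace (2/3) with (Psi_hat (1/2)) by (unfold Psi_hat; field). apply ph_anti; lra.
  - replace (46/55) with (Psi_hat (3/8)) by (unfold Psi_hat; field). apply ph_anti; lra.
Qed.

Lemma RP_pos v t : 0 < Rpower v t.
Proof. unfold Rpower; apply exp_pos. Qed.

Lemma RP_base a b t : 0 < a -> a <= b -> 0 <= t -> Rpower a t <= Rpower b t.
Proof.
  intros Ha Hab Ht. unfold Rpower. apply exp_le'.
  apply Rmult_le_compat_l; auto. apply ln_le'; auto.
Qed.

Lemma RP_exp v s t : 0 < v < 1 -> s <= t -> Rpower v t <= Rpower v s.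
Proof.
  intros Hv Hst. unfold Rpower. apply exp_le'.
  assert (ln v < 0). { rewrite <- ln_1. apply ln_increasing; lra. } nra.
Qed.

Lemma RP_num V c : 0 < V -> 0 < c -> V^17 < c^3 -> Rpower V (17/3) < c.
Proof.
  intros HV Hc H. destruct (Rlt_or_le (Rpower V (17/3)) c) as [h|h]; auto.
  exfalso. assert (c^3 <= (Rpower V (17/3))^3) by (apply pow_incr; lra).
  rewrite <- (Rpower_pow 3 (Rpower V (17/3))) in H0 by apply RP_pos.
  rewrite Rpower_mult in H0.
  replace (17/3 * INR 3) with (INR 17) in H0 by (simpl; field).
  rewrite Rpower_pow in H0 by auto. lra.
Qed.

Lemma w_bound d p x : 674/100 <= d <= 15/2 -> 3/8 <= p -> p <= x <= 1/2 ->
  Rpower (Psi_hat x) (d-1) <= Rpower (Psi_hat p) (17/3).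
Proof.
  intros Hd Hp Hx. pose proof (ph_range x ltac:(lra)). pose proof (ph_range p ltac:(lra)).
  apply Rle_trans with (Rpower (Psi_hat x) (17/3)).
  - apply RP_exp; lra.
  - apply RP_base; try lra. apply ph_anti; lra.
Qed.

Lemma fix_lt x w : 0 <= w -> 0 <= x -> x < 1 -> w * (1 - x) < 1 - 2*x -> x < (1 - w)/(2 - w).
Proof.
  intros H0 H3 H1 H2. assert (w < 1) by nra.
  apply (Rmult_lt_reg_r (2 - w)); [lra|]. unfold Rdiv. rewrite Rmult_assoc, Rinv_l by lra. nra.
Qed.

Lemma A_cell d p q c x : 674/100 <= d <= 15/2 -> 3/8 <= p -> q <= 1/2 -> p <= x <= q ->
  0 < c -> Psi_hat p ^ 17 < c^3 -> c * (1 - q) < 1 - 2*q -> x < Psi d x.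
Proof.
  intros Hd Hp Hq Hx Hc Hn Hc2.
  pose proof (ph_range p ltac:(lra)).
  pose proof (w_bound d p x Hd Hp ltac:(lra)).
  pose proof (RP_num (Psi_hat p) c ltac:(lra) Hc Hn).
  pose proof (RP_pos (Psi_hat x) (d-1)).
  unfold Psi, Psi_dot. set (w := Rpower (Psi_hat x) (d-1)) in *.
  assert (w < c) by lra.
  assert (c < 1) by nra.
  apply fix_lt; try lra.
  assert (w * (1-x) <= c * (1-x)) by (apply Rmult_le_compat_r; lra).
  nra.
Qed.

Ltac acell d p q c V := apply (A_cell d p q c); [assumption|lra|lra|lra|lra| replace (Psi_hat p) with V by (unfold Psi_hat; field); lra | lra].

Lemma A_all d x : 674/100 <= d <= 15/2 -> 3/8 <= x <= 43/100 -> x < Psi d x.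
Proof.
  intros Hd Hx.
  destruct (Rle_lt_dec x (77/200)). { acell d (3/8) (77/200) (4/11) (46/55). }
  destruct (Rle_lt_dec x (79/200)). { acell d (77/200) (79/200) (9/26) (28142/34071). }
  destruct (Rle_lt_dec x (81/200)). { acell d (79/200) (81/200) (6/19) (27518/33759). }
  destruct (Rle_lt_dec x (83/200)). { acell d (81/200) (83/200) (9/31) (26878/33439). }
  destruct (Rle_lt_dec x (21/50)). { acell d (83/200) (21/50) (3/11) (26222/33111). }
  destruct (Rle_lt_dec x (17/40)). { acell d (21/50) (17/40) (7/27) (1618/2059). }
  acell d (17/40) (43/100) (10/41) (1022/1311).
Qed.

Lemma key1 vx vy t : 0 < vy -> vy <= vx -> 0 <= t ->
  Rpower vx t - Rpower vy t <= t * Rpower vx t * (vx / vy - 1).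
Proof.
  intros Hy Hxy Ht.
  assert (Hx : 0 < vx) by lra.
  assert (Hl : ln vx - ln vy <= vx / vy - 1).
  { replace (ln vx) with (ln (vy * (vx / vy))) by (f_equal; field; lra).
    rewrite ln_mult by (try apply Rdiv_lt_0_compat; lra).
    pose proof (ln_le_sub1 (vx/vy) ltac:(apply Rdiv_lt_0_compat; lra)). lra. }
  assert (E : Rpower vy t = Rpower vx t * exp (t * (ln vy - ln vx))).
  { unfold Rpower. rewrite <- exp_plus. f_equal. ring. }
  pose proof (exp_ineq1_le (t * (ln vy - ln vx))).
  pose proof (RP_pos vx t).
  rewrite E.
  assert (Rpower vx t * (1 + t * (ln vy - ln vx)) <= Rpower vx t * exp (t * (ln vy - ln vx)))
    by (apply Rmult_le_compat_l; lra).
  assert (t * (ln vx - ln vy) <= t * (vx/vy - 1)) by (apply Rmult_le_compat_l; lra).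
  assert (Rpower vx t * (t * (ln vx - ln vy)) <= Rpower vx t * (t * (vx/vy - 1)))
    by (apply Rmult_le_compat_l; lra).
  nra.
Qed.

Lemma key2 x y : 0 <= x -> x < y -> y <= 1/2 ->
  Psi_hat x / Psi_hat y - 1 = (y - x) * ((x + y) / ((1 - x^2) * (1 - 2*y^2))).
Proof.
  intros. unfold Psi_hat. field. repeat split; nra.
Qed.

Lemma B_cell d p q Wp x y : 674/100 <= d <= 15/2 -> 3/8 <= p -> q <= 1/2 -> p <= x -> x < y -> y <= q ->
  0 < Wp -> Wp < 1 -> Psi_hat p ^ 17 < Wp^3 ->
  13/2 * Wp * (2*q) < (1 - q^2) * (1 - 2*q^2) * (2 - Wp)^2 ->
  Psi d y - y < Psi d x - x.
Proof.
  intros Hd Hp Hq Hpx Hxy Hyq HW HW1 Hn Hc.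
  pose proof (ph_range x ltac:(lra)) as Rx. pose proof (ph_range y ltac:(lra)) as Ry.
  pose proof (ph_range p ltac:(lra)) as Rp.
  pose proof (ph_anti x y ltac:(lra) ltac:(lra) ltac:(lra)) as Hvxy.
  pose proof (RP_num (Psi_hat p) Wp ltac:(lra) HW Hn) as HWp.
  pose proof (w_bound d p x Hd Hp ltac:(lra)) as Bx.
  pose proof (w_bound d p y Hd Hp ltac:(lra)) as By.
  pose proof (key1 (Psi_hat x) (Psi_hat y) (d-1) ltac:(lra) Hvxy ltac:(lra)) as K1.
  rewrite (key2 x y) in K1 by lra.
  pose proof (RP_base (Psi_hat y) (Psi_hat x) (d-1) ltac:(lra) Hvxy ltac:(lra)) as Hwyx.
  pose proof (RP_pos (Psi_hat y) (d-1)) as Pwy.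
  unfold Psi, Psi_dot.
  set (wx := Rpower (Psi_hat x) (d-1)) in *.
  set (wy := Rpower (Psi_hat y) (d-1)) in *.
  set (K := (x + y) / ((1 - x^2) * (1 - 2*y^2))) in *.
  set (t := d - 1) in *.
  assert (Hwx : wx < Wp) by lra.
  assert (HK0 : 0 <= K).
  { unfold K. apply Rle_mult_inv_pos; [lra|]. apply Rmult_lt_0_compat; nra. }
  assert (HK : K <= (2*q) / ((1 - q^2) * (1 - 2*q^2))).
  { unfold K, Rdiv. apply Rmult_le_compat; try lra.
    - left; apply Rinv_0_lt_compat; apply Rmult_lt_0_compat; nra.
    - apply Rinv_le_contravar. apply Rmult_lt_0_compat; nra.
      apply Rmult_le_compat; nra. }
  assert (Hq2 : 13/2 * Wp * ((2*q) / ((1 - q^2) * (1 - 2*q^2))) < (2 - Wp)^2).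
  { set (D := (1 - q^2) * (1 - 2*q^2)).
    assert (0 < D) by (apply Rmult_lt_0_compat; nra).
    replace (13/2 * Wp * ((2*q) / D)) with ((13/2 * Wp * (2*q)) * / D) by (unfold Rdiv; ring).
    apply (Rmult_lt_reg_r D); auto. rewrite Rmult_assoc, Rinv_l, Rmult_1_r by lra.
    unfold D. lra. }
  assert (HtK : t * wx * K < (2 - wx) * (2 - wy)).
  { assert (t * wx * K <= 13/2 * Wp * ((2*q) / ((1 - q^2) * (1 - 2*q^2)))).
    { pose proof (RP_pos (Psi_hat x) t) as Pwx. fold wx in Pwx.
      apply Rmult_le_compat; [apply Rmult_le_pos; unfold t; lra|lra| |lra]. apply Rmult_le_compat; unfold t; lra. }
    assert ((2 - Wp)^2 <= (2 - wx) * (2 - wy)) by (replace ((2-Wp)^2) with ((2-Wp)*(2-Wp)) by ring; apply Rmult_le_compat; lra).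
    lra. }
  assert (E : (1 - wy) / (2 - wy) - (1 - wx) / (2 - wx) = (wx - wy) / ((2 - wx) * (2 - wy)))
    by (field; split; apply Rgt_not_eq; lra).
  assert ((wx - wy) / ((2 - wx) * (2 - wy)) < y - x).
  { assert (0 < (2 - wx) * (2 - wy)) by (apply Rmult_lt_0_compat; lra).
    apply (Rmult_lt_reg_r ((2 - wx) * (2 - wy))); auto.
    unfold Rdiv. rewrite Rmult_assoc, Rinv_l, Rmult_1_r by lra.
    assert (t * wx * ((y - x) * K) = (y - x) * (t * wx * K)) by ring.
    assert ((y - x) * (t * wx * K) < (y-x) * ((2 - wx) * (2 - wy))) by (apply Rmult_lt_compat_l; lra).
    lra. }
  lra.
Qed.

Lemma decr_join (G : R -> R) a b c :
  (forall x y, a <= x -> x < y -> y <= b -> G y < G x) ->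
  (forall x y, b <= x -> x < y -> y <= c -> G y < G x) ->
  forall x y, a <= x -> x < y -> y <= c -> G y < G x.
Proof.
  intros H1 H2 x y Hx Hxy Hy.
  destruct (Rle_lt_dec y b). { apply H1; lra. }
  destruct (Rle_lt_dec b x). { apply H2; lra. }
  destruct (Req_dec x b). { subst; apply H2; lra. }
  apply Rlt_trans with (G b). apply H2; lra. apply H1; lra.
Qed.

Ltac bcell d p q W V := apply (B_cell d p q W); [assumption|lra|lra|lra|lra|lra|lra|lra| replace (Psi_hat p) with V by (unfold Psi_hat; field); lra | lra].

Lemma B_all d x y : 674/100 <= d <= 15/2 -> 43/100 <= x -> x < y -> y <= 1/2 ->
  Psi d y - y < Psi d x - x.
Proof.
  intros Hd. revert x y.
  apply (decr_join (fun z => Psi d z - z) _ (44/100)).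
  - intros x y H1 H2 H3. bcell d (43/100) (44/100) (233/1000) (6302/8151).
  - apply (decr_join (fun z => Psi d z - z) _ (47/100)).
    + intros x y H1 H2 H3. bcell d (44/100) (47/100) (53/250) (383/504).
    + intros x y H1 H2 H3. bcell d (47/100) (1/2) (19/125) (5582/7791).
Qed.

Lemma cont d a : 674/100 <= d -> 3/8 <= a <= 1/2 -> continuity_pt (fun z => z - Psi d z) a.
Proof.
  intros Hd Ha. pose proof (ph_range a Ha) as R.
  apply continuity_pt_filterlim. apply (ex_derive_continuous (fun z => z - Psi d z)).
  unfold Psi, Psi_dot, Rpower. unfold Psi_hat in R |- *.
  auto_derive.
  replace (1 + - (2 * (a * (a * 1)))) with (1 - 2*a^2) by ring.
  replace (1 + - (a * (a * 1))) with (1 - a^2) by ring.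
  fold ((1 - 2*a^2)/(1 - a^2)).
  repeat split; try lra.
  - apply Rgt_not_eq; nra.
  - apply Rgt_not_eq; nra.
  - assert (H : ln ((1 - 2*a^2)/(1 - a^2)) < 0) by (rewrite <- ln_1; apply ln_increasing; lra).
    assert (H0 : (d-1) * ln ((1 - 2*a^2)/(1 - a^2)) < 0) by nra.
    pose proof (exp_increasing _ _ H0). rewrite exp_0 in H1. apply Rgt_not_eq. lra.
Qed.

Theorem lemma4p1 (d : R) (hd : 674/100 <= d <= 15/2) :
  exists! x : R, 3/8 <= x <= 1/2 /\ Psi d x = x.
Proof.
  assert (Hlo : 3/8 - Psi d (3/8) < 0) by (pose proof (A_all d (3/8) hd ltac:(lra)); lra).
  assert (Hhi : 0 < 1/2 - Psi d (1/2)).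
  { unfold Psi, Psi_dot. pose proof (RP_pos (Psi_hat (1/2)) (d-1)).
    set (w := Rpower (Psi_hat (1/2)) (d-1)) in *.
    assert (w < 1).
    { pose proof (w_bound d (3/8) (1/2) hd ltac:(lra) ltac:(lra)).
      assert (Hv : Psi_hat (3/8) = 46/55) by (unfold Psi_hat; field).
      assert (Hn : Psi_hat (3/8) ^ 17 < 1 ^ 3) by (rewrite Hv; lra).
      assert (Hp : 0 < Psi_hat (3/8)) by lra.
      pose proof (RP_num (Psi_hat (3/8)) 1 Hp ltac:(lra) Hn). unfold w; lra. }
    assert ((1 - w) / (2 - w) = 1/2 - w / (2*(2 - w))) by (field; apply Rgt_not_eq; lra).
    rewrite H1. assert (0 < w / (2*(2-w))) by (apply Rdiv_lt_0_compat; lra). lra. }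
  destruct (IVT_interv (fun z => z - Psi d z) (3/8) (1/2)
    (fun a Ha => cont d a (proj1 hd) Ha) ltac:(lra) Hlo Hhi) as [z [Hz Hfz]].
  exists z. split. { split; auto; lra. }
  intros x' [Hx' Hf'].
  assert (Hz2 : 43/100 < z).
  { destruct (Rle_lt_dec z (43/100)); auto. pose proof (A_all d z hd ltac:(lra)). lra. }
  assert (Hx2 : 43/100 < x').
  { destruct (Rle_lt_dec x' (43/100)); auto. pose proof (A_all d x' hd ltac:(lra)). lra. }
  destruct (Rtotal_order z x') as [h|[h|h]]; auto.
  - pose proof (B_all d z x' hd ltac:(lra) h ltac:(lra)). lra.
  - pose proof (B_all d x' z hd ltac:(lra) h ltac:(lra)). lra.
Qed.
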